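(* Let $N_k=N\cup\{\Gamma\rightarrow E_1,\dots,E_n\}$ and $N_{k+1}=N\cup\{\Gamma\rightarrow E_i\}$ (a Horn transformation, $n>1$). Let $N^\bot_{k+1}$ be a conflicting core of $N_{k+1}$, and let $(\Gamma\rightarrow E_i)\sigma_j$, $1\le j\le m$, be the clauses of $N^\bot_{k+1}$ that are instances of $\Gamma\rightarrow E_i$ (taken as the replaced ones). Suppose that for each $j$ there are a substitution $\sigma'_j$, a subset $N^j_k\subseteq N_k$ and a substitution $\tau_j$ such that for every grounding substitution $\theta$, $N^j_k\tau_j\theta\cup\{(\Gamma\rightarrow E_1,\dots,E_n)\sigma'_j\theta\}\models(\Gamma\rightarrow E_i)\sigma_j\theta$. Then $$\big(N^\bot_{k+1}\setminus\{(\Gamma\rightarrow E_i)\sigma_j\mid 1\le j\le m\}\big)\cup\{(\Gamma\rightarrow E_1,\dots,E_n)\sigma'_j\mid 1\le j\le m\}\cup\bigcup_j N^j_k\tau_j$$ is a conflicting core of $N_k$.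
   Context: First-order logic without equality. A clause is a finite multiset of literals written $\Gamma \rightarrow \Delta$. A Herbrand interpretation is a set of ground atoms; $I \models \Gamma\rightarrow\Delta$ iff for every grounding substitution $\sigma$, $\Delta\sigma\cap I\neq\emptyset$ or $\Gamma\sigma\not\subseteq I$; for ground clause sets, $M\models D$ means every model of $M$ satisfies $D$. A finite clause set $N^\bot$ is a conflicting core if for every substitution $\tau$ grounding all of $N^\bot$ (one substitution for the whole set, so variables are shared among clauses) the set $N^\bot\tau$ is unsatisfiable. $N^\bot$ is a conflicting core of $N$ if moreover every $C\in N^\bot$ equals $C'\sigma$ for some $C'\in N$ and substitution $\sigma$. *)

(* Defs.v *)
From Stdlib Require Import List Permutation.
Import ListNotations.

(* Terms over an untyped signature: function symbols are nats (any arity). *)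
Inductive term : Type :=
| Var : nat -> term
| Fn  : nat -> list term -> term.

Definition atom : Type := (nat * list term)%type.

(* A clause  Gamma -> Delta  : (Gamma, Delta), each a finite multiset (list). *)
Definition clause : Type := (list atom * list atom)%type.

Definition clause_set : Type := clause -> Prop.

Definition subst : Type := nat -> term.

Fixpoint tsubst (s : subst) (t : term) : term :=
  match t with
  | Var x => s x
  | Fn f ts => Fn f (map (tsubst s) ts)
  end.

Definition asubst (s : subst) (a : atom) : atom := (fst a, map (tsubst s) (snd a)).

Definition csubst (s : subst) (C : clause) : clause :=
  (map (asubst s) (fst C), map (asubst s) (snd C)).

Fixpoint ground_term (t : term) : Prop :=
  match t with
  | Var _ => False
  | Fn _ ts => (fix aux (l : list term) : Prop :=
                 match l with
                 | [] => True
                 | u :: l' => ground_term u /\ aux l'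
                 end) ts
  end.

Definition grounding (s : subst) : Prop := forall x, ground_term (s x).

Definition clause_eq (C D : clause) : Prop :=
  Permutation (fst C) (fst D) /\ Permutation (snd C) (snd D).

(* Herbrand interpretation: a set of (ground) atoms. *)
Definition interp : Type := atom -> Prop.

Definition sat_ground (I : interp) (C : clause) : Prop :=
  (exists a, In a (snd C) /\ I a) \/ (exists a, In a (fst C) /\ ~ I a).

Definition models_set (I : interp) (M : clause_set) : Prop :=
  forall C, M C -> sat_ground I C.

Definition entails (M : clause_set) (D : clause) : Prop :=
  forall I : interp, models_set I M -> sat_ground I D.

Definition finite_set (S : clause_set) : Prop :=
  exists l : list clause, forall C, S C <-> In C l.

Definition set_subst (t : subst) (S : clause_set) : clause_set :=
  fun D => exists C, S C /\ D = csubst t C.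

Definition unsatisfiable (M : clause_set) : Prop :=
  ~ exists I : interp, models_set I M.

Definition instance_of (N : clause_set) (C : clause) : Prop :=
  exists C' s, N C' /\ clause_eq C (csubst s C').

Definition conflicting_core (S : clause_set) : Prop :=
  finite_set S /\ forall t, grounding t -> unsatisfiable (set_subst t S).

Definition conflicting_core_of (S N : clause_set) : Prop :=
  conflicting_core S /\ forall C, S C -> instance_of N C.

Definition set_add (N : clause_set) (C : clause) : clause_set :=
  fun D => N D \/ D = C.

Definition of_list (l : list clause) : clause_set := fun C => In C l.

(* Main.v *)
Require Import Defs.
From Stdlib Require Import List Permutation Classical Lia.
Import ListNotations.

Lemma filterP (P : clause -> Prop) (l : list clause) :
  exists l', forall C, In C l' <-> In C l /\ P C.
Proof.
  induction l as [|a l [l' IH]].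
  - exists []. simpl. tauto.
  - destruct (classic (P a)) as [Ha|Ha].
    + exists (a :: l'). intro C. simpl. rewrite IH. split.
      * intros [<-|H]; tauto.
      * intros [[<-|H] HP]; tauto.
    + exists l'. intro C. rewrite IH. simpl. split.
      * tauto.
      * intros [[<-|H] HP]; tauto.
Qed.

Lemma sat_perm I C D : clause_eq C D -> sat_ground I D -> sat_ground I C.
Proof.
  intros [H1 H2] [[a [Ha Ia]]|[a [Ha Ia]]].
  - left. exists a. split; auto. eapply Permutation_in; [symmetry; exact H2|exact Ha].
  - right. exists a. split; auto. eapply Permutation_in; [symmetry; exact H1|exact Ha].
Qed.

Lemma clause_eq_subst t C D : clause_eq C D -> clause_eq (csubst t C) (csubst t D).
Proof.
  intros [H1 H2]. split; simpl; apply Permutation_map; auto.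
Qed.

Lemma clause_eq_refl C : clause_eq C C.
Proof. split; apply Permutation_refl. Qed.

Theorem lemma5
  (N : clause_set) (Gamma E : list atom) (i : nat)
  (Hn : 1 < length E) (Hi : i < length E)
  (Nbot : clause_set)
  (m : nat) (sigma sigma' tau : nat -> subst) (Nj : nat -> list clause) :
  let Cn := (Gamma, E) : clause in
  let Ci := (Gamma, [nth i E (0, [])]) : clause in
  let Nk := set_add N Cn in
  let Nk1 := set_add N Ci in
  conflicting_core_of Nbot Nk1 ->
  (* the (Gamma -> E_i) sigma_j, j < m, are clauses of Nbot ... *)
  (forall j, j < m -> Nbot (csubst (sigma j) Ci)) ->
  (* ... and they are all the clauses of Nbot that are instances of Gamma -> E_i *)
  (forall C, Nbot C -> instance_of (fun D => D = Ci) C ->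
     exists j, j < m /\ clause_eq C (csubst (sigma j) Ci)) ->
  (forall j, j < m -> forall C, In C (Nj j) -> Nk C) ->
  (forall j, j < m -> forall theta, grounding theta ->
     entails
       (fun D => set_subst theta (set_subst (tau j) (of_list (Nj j))) D
                 \/ D = csubst theta (csubst (sigma' j) Cn))
       (csubst theta (csubst (sigma j) Ci))) ->
  conflicting_core_of
    (fun C =>
       (Nbot C /\ ~ (exists j, j < m /\ clause_eq C (csubst (sigma j) Ci)))
       \/ (exists j, j < m /\ C = csubst (sigma' j) Cn)
       \/ (exists j, j < m /\ set_subst (tau j) (of_list (Nj j)) C))
    Nk.
Proof.
  intros Cn Ci Nk Nk1 [[[l Hl] Hunsat] Hinst] _ Hall HNj Hent.
  split; [split|].
  - destruct (filterP (fun C => ~ (exists j, j < m /\ clause_eq C (csubst (sigma j) Ci))) l)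
      as [l' Hl'].
    exists (l' ++ map (fun j => csubst (sigma' j) Cn) (seq 0 m)
               ++ flat_map (fun j => map (csubst (tau j)) (Nj j)) (seq 0 m)).
    intro C. rewrite !in_app_iff, Hl', <- Hl, in_map_iff, in_flat_map. split.
    + intros [H|[[j [Hj ->]]|[j [Hj [C' [HC' ->]]]]]].
      * left; exact H.
      * right; left. exists j. split; auto. apply in_seq; lia.
      * right; right. exists j. split; [apply in_seq; lia|]. apply in_map. exact HC'.
    + intros [H|[[j [<- Hj]]|[j [Hj HC]]]].
      * left; exact H.
      * right; left. exists j. split; auto. apply in_seq in Hj. lia.
      * right; right. exists j. split; [apply in_seq in Hj; lia|].
        apply in_map_iff in HC. destruct HC as [C' [<- HC']]. exists C'. split; auto.
  - intros t Ht [I HI]. apply (Hunsat t Ht). exists I.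
    intros D [C [HC ->]].
    destruct (classic (exists j, j < m /\ clause_eq C (csubst (sigma j) Ci))) as [[j [Hj Heq]]|Hn'].
    + eapply sat_perm; [apply clause_eq_subst; exact Heq|].
      apply (Hent j Hj t Ht). intros D [HD| ->].
      * destruct HD as [C1 [HC1 ->]]. apply HI. exists C1. split; auto.
        right; right. exists j. split; auto.
      * apply HI. eexists. split; [|reflexivity]. right; left. exists j; auto.
    + apply HI. exists C. split; auto.
  - intros C [[HC Hn']|[[j [Hj ->]]|[j [Hj [C' [HC' ->]]]]]].
    + destruct (Hinst C HC) as [C' [s [[HN| ->] Heq]]].
      * exists C', s. split; [left; exact HN|exact Heq].
      * exfalso. apply Hn'. apply Hall; auto. exists Ci, s. split; auto.
    + exists Cn, (sigma' j). split; [right; reflexivity|apply clause_eq_refl].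
    + exists C', (tau j). split; [apply (HNj j Hj); exact HC'|apply clause_eq_refl].
Qed.
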